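(* Let $F\colon\mathbb{A}\to\mathbb{B}$ be a double functor. Then $F$ is a double trivial fibration if and only if both $\mathbf{H}F\colon\mathbf{H}\mathbb{A}\to\mathbf{H}\mathbb{B}$ and $\mathcal{V}F\colon\mathcal{V}\mathbb{A}\to\mathcal{V}\mathbb{B}$ are trivial fibrations in the Lack model structure on $2\mathrm{Cat}$ (i.e.\ 2-functors that are both biequivalences and Lack fibrations).
   Context: A double category has objects, horizontal morphisms, vertical morphisms and squares; a square $\alpha\colon(u\,{}^{a}_{b}\,v)$ has top horizontal boundary $a\colon A\to B$, bottom $b\colon A'\to B'$, left vertical boundary $u\colon A\to A'$ and right $v\colon B\to B'$; $e_A$ is the vertical identity on $A$. $\mathbf{H}\mathbb{A}$ is the underlying horizontal 2-category (objects, horizontal morphisms, and as 2-cells $a\Rightarrow b$ the squares $(e_A\,{}^{a}_{b}\,e_B)$). $\mathcal{V}\mathbb{A}$ is the 2-category whose objects are vertical morphisms of $\mathbb{A}$, morphisms $u\to v$ are squares with left boundary $u$ and right boundary $v$, and 2-cells from $\alpha\colon(u\,{}^{a}_{b}\,v)$ to $\beta\colon(u\,{}^{c}_{d}\,v)$ are pairs of squares $\sigma_0\colon(e_A\,{}^{a}_{c}\,e_B)$, $\sigma_1\colon(e_{A'}\,{}^{b}_{d}\,e_{B'})$ with $\sigma_0$ on top of $\beta$ equal to $\alpha$ on top of $\sigma_1$. A 2-functor $G\colon\mathcal{A}\to\mathcal{B}$ is a biequivalence if it is essentially surjective up to equivalence on objects, essentially full up to invertible 2-cell on morphisms, and fully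 faithful on 2-cells; it is a Lack fibration if equivalences $b\colon B\to GC$ lift to equivalences $a\colon A\to C$ with $Ga=b$, and invertible 2-cells $\beta\colon b\cong Gc$ lift to invertible 2-cells $\alpha\colon a\cong c$ with $G\alpha=\beta$. A double functor $F\colon\mathbb{A}\to\mathbb{B}$ is a double trivial fibration if (dt1) it is surjective on objects; (dt2) for every horizontal morphism $b\colon FA\to FC$ there is a horizontal morphism $a\colon A\to C$ with $Fa=b$; (dt3) every vertical morphism of $\mathbb{B}$ is of the form $Fu$ for some vertical morphism $u$ of $\mathbb{A}$; (dt4) for every square $\beta\colon(Fu\,{}^{Fa}_{Fc}\,Fu')$ in $\mathbb{B}$ there is a unique square $\alpha\colon(u\,{}^{a}_{c}\,u')$ in $\mathbb{A}$ with $F\alpha=\beta$. *)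

(* Defs.v *)
(* Strict double categories and strict 2-categories, in the "flat"
   (internal-category) presentation: each kind of cell is a type equipped with
   boundary functions; compositions are total functions whose laws are only
   imposed on composable inputs. *)

Set Implicit Arguments.

(* Conventions: [hcomp a b] is "a then b" (a : A -> B, b : B -> C);   *)
(* [vcomp u v] is "u then v"; [sq_hcomp al be] puts al to the left   *)
(* of be (needs right al = left be); [sq_vcomp al be] puts al on top  *)
(* of be (needs bot al = top be).  [vid A] is e_A, [sq_hid u] is the  *)
(* horizontal identity square (u id id u), [sq_vid a] the vertical    *)
(* identity square (e a a e).                                         *)

Record DoubleCat := {
  ob : Type; hor : Type; ver : Type; sq : Type;
  hdom : hor -> ob; hcod : hor -> ob;
  vdom : ver -> ob; vcod : ver -> ob;
  sq_top : sq -> hor; sq_bot : sq -> hor;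
  sq_left : sq -> ver; sq_right : sq -> ver;
  hid : ob -> hor; vid : ob -> ver;
  hcomp : hor -> hor -> hor; vcomp : ver -> ver -> ver;
  sq_hid : ver -> sq; sq_vid : hor -> sq;
  sq_hcomp : sq -> sq -> sq; sq_vcomp : sq -> sq -> sq;
  hdom_hid : forall A, hdom (hid A) = A;
  hcod_hid : forall A, hcod (hid A) = A;
  vdom_vid : forall A, vdom (vid A) = A;
  vcod_vid : forall A, vcod (vid A) = A;
  hdom_hcomp : forall a b, hcod a = hdom b -> hdom (hcomp a b) = hdom a;
  hcod_hcomp : forall a b, hcod a = hdom b -> hcod (hcomp a b) = hcod b;
  vdom_vcomp : forall u v, vcod u = vdom v -> vdom (vcomp u v) = vdom u;
  vcod_vcomp : forall u v, vcod u = vdom v -> vcod (vcomp u v) = vcod v;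
  sq_frame_tl : forall s, hdom (sq_top s) = vdom (sq_left s);
  sq_frame_tr : forall s, hcod (sq_top s) = vdom (sq_right s);
  sq_frame_bl : forall s, hdom (sq_bot s) = vcod (sq_left s);
  sq_frame_br : forall s, hcod (sq_bot s) = vcod (sq_right s);
  sq_hid_left : forall u, sq_left (sq_hid u) = u;
  sq_hid_right : forall u, sq_right (sq_hid u) = u;
  sq_hid_top : forall u, sq_top (sq_hid u) = hid (vdom u);
  sq_hid_bot : forall u, sq_bot (sq_hid u) = hid (vcod u);
  sq_vid_top : forall a, sq_top (sq_vid a) = a;
  sq_vid_bot : forall a, sq_bot (sq_vid a) = a;
  sq_vid_left : forall a, sq_left (sq_vid a) = vid (hdom a);
  sq_vid_right : forall a, sq_right (sq_vid a) = vid (hcod a);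
  sq_hcomp_top : forall s t, sq_right s = sq_left t ->
    sq_top (sq_hcomp s t) = hcomp (sq_top s) (sq_top t);
  sq_hcomp_bot : forall s t, sq_right s = sq_left t ->
    sq_bot (sq_hcomp s t) = hcomp (sq_bot s) (sq_bot t);
  sq_hcomp_left : forall s t, sq_right s = sq_left t ->
    sq_left (sq_hcomp s t) = sq_left s;
  sq_hcomp_right : forall s t, sq_right s = sq_left t ->
    sq_right (sq_hcomp s t) = sq_right t;
  sq_vcomp_left : forall s t, sq_bot s = sq_top t ->
    sq_left (sq_vcomp s t) = vcomp (sq_left s) (sq_left t);
  sq_vcomp_right : forall s t, sq_bot s = sq_top t ->
    sq_right (sq_vcomp s t) = vcomp (sq_right s) (sq_right t);
  sq_vcomp_top : forall s t, sq_bot s = sq_top t ->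
    sq_top (sq_vcomp s t) = sq_top s;
  sq_vcomp_bot : forall s t, sq_bot s = sq_top t ->
    sq_bot (sq_vcomp s t) = sq_bot t;
  hcomp_id_l : forall a, hcomp (hid (hdom a)) a = a;
  hcomp_id_r : forall a, hcomp a (hid (hcod a)) = a;
  hcomp_assoc : forall a b c, hcod a = hdom b -> hcod b = hdom c ->
    hcomp a (hcomp b c) = hcomp (hcomp a b) c;
  vcomp_id_l : forall u, vcomp (vid (vdom u)) u = u;
  vcomp_id_r : forall u, vcomp u (vid (vcod u)) = u;
  vcomp_assoc : forall u v w, vcod u = vdom v -> vcod v = vdom w ->
    vcomp u (vcomp v w) = vcomp (vcomp u v) w;
  sq_hcomp_id_l : forall s, sq_hcomp (sq_hid (sq_left s)) s = s;
  sq_hcomp_id_r : forall s, sq_hcomp s (sq_hid (sq_right s)) = s;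
  sq_hcomp_assoc : forall s t r, sq_right s = sq_left t -> sq_right t = sq_left r ->
    sq_hcomp s (sq_hcomp t r) = sq_hcomp (sq_hcomp s t) r;
  sq_vcomp_id_l : forall s, sq_vcomp (sq_vid (sq_top s)) s = s;
  sq_vcomp_id_r : forall s, sq_vcomp s (sq_vid (sq_bot s)) = s;
  sq_vcomp_assoc : forall s t r, sq_bot s = sq_top t -> sq_bot t = sq_top r ->
    sq_vcomp s (sq_vcomp t r) = sq_vcomp (sq_vcomp s t) r;
  sq_hid_vcomp : forall u v, vcod u = vdom v ->
    sq_hid (vcomp u v) = sq_vcomp (sq_hid u) (sq_hid v);
  sq_vid_hcomp : forall a b, hcod a = hdom b ->
    sq_vid (hcomp a b) = sq_hcomp (sq_vid a) (sq_vid b);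
  sq_hid_vid : forall A, sq_hid (vid A) = sq_vid (hid A);
  interchange : forall s t p q,
    sq_right s = sq_left t -> sq_right p = sq_left q ->
    sq_bot s = sq_top p -> sq_bot t = sq_top q ->
    sq_vcomp (sq_hcomp s t) (sq_hcomp p q) = sq_hcomp (sq_vcomp s p) (sq_vcomp t q)
}.

Arguments hdom {d}. Arguments hcod {d}. Arguments vdom {d}. Arguments vcod {d}.
Arguments sq_top {d}. Arguments sq_bot {d}. Arguments sq_left {d}. Arguments sq_right {d}.
Arguments hid {d}. Arguments vid {d}. Arguments hcomp {d}. Arguments vcomp {d}.
Arguments sq_hid {d}. Arguments sq_vid {d}. Arguments sq_hcomp {d}. Arguments sq_vcomp {d}.

Record DoubleFunctor (A B : DoubleCat) := {
  Fo : ob A -> ob B; Fh : hor A -> hor B; Fv : ver A -> ver B; Fs : sq A -> sq B;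
  Fh_hdom : forall a, hdom (Fh a) = Fo (hdom a);
  Fh_hcod : forall a, hcod (Fh a) = Fo (hcod a);
  Fv_vdom : forall u, vdom (Fv u) = Fo (vdom u);
  Fv_vcod : forall u, vcod (Fv u) = Fo (vcod u);
  Fs_top : forall s, sq_top (Fs s) = Fh (sq_top s);
  Fs_bot : forall s, sq_bot (Fs s) = Fh (sq_bot s);
  Fs_left : forall s, sq_left (Fs s) = Fv (sq_left s);
  Fs_right : forall s, sq_right (Fs s) = Fv (sq_right s);
  Fh_hid : forall X, Fh (hid X) = hid (Fo X);
  Fv_vid : forall X, Fv (vid X) = vid (Fo X);
  Fh_hcomp : forall a b, hcod a = hdom b -> Fh (hcomp a b) = hcomp (Fh a) (Fh b);
  Fv_vcomp : forall u v, vcod u = vdom v -> Fv (vcomp u v) = vcomp (Fv u) (Fv v);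
  Fs_sq_hid : forall u, Fs (sq_hid u) = sq_hid (Fv u);
  Fs_sq_vid : forall a, Fs (sq_vid a) = sq_vid (Fh a);
  Fs_sq_hcomp : forall s t, sq_right s = sq_left t ->
    Fs (sq_hcomp s t) = sq_hcomp (Fs s) (Fs t);
  Fs_sq_vcomp : forall s t, sq_bot s = sq_top t ->
    Fs (sq_vcomp s t) = sq_vcomp (Fs s) (Fs t)
}.

Arguments Fo {A B}. Arguments Fh {A B}. Arguments Fv {A B}. Arguments Fs {A B}.

Definition double_trivial_fibration (A B : DoubleCat) (F : DoubleFunctor A B) : Prop :=
  (* dt1 *)
  (forall Y : ob B, exists X : ob A, Fo F X = Y) /\
  (* dt2 *)
  (forall (X Z : ob A) (b : hor B), hdom b = Fo F X -> hcod b = Fo F Z ->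
     exists a : hor A, hdom a = X /\ hcod a = Z /\ Fh F a = b) /\
  (* dt3 *)
  (forall v : ver B, exists u : ver A, Fv F u = v) /\
  (* dt4: for a frame (u a c u') in A and a square (Fu Fa Fc Fu') in B,
     there is a unique square (u a c u') in A over it *)
  (forall (u u' : ver A) (a c : hor A) (be : sq B),
     hdom a = vdom u -> hcod a = vdom u' -> hdom c = vcod u -> hcod c = vcod u' ->
     sq_left be = Fv F u -> sq_right be = Fv F u' ->
     sq_top be = Fh F a -> sq_bot be = Fh F c ->
     exists al : sq A,
       (sq_left al = u /\ sq_right al = u' /\ sq_top al = a /\ sq_bot al = c /\
        Fs F al = be) /\
       forall al' : sq A,
         sq_left al' = u -> sq_right al' = u' -> sq_top al' = a -> sq_bot al' = c ->
         Fs F al' = be -> al' = al).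

(* (Strict) 2-categories, given by the operations needed for the      *)
(* notions of equivalence, invertible 2-cell, biequivalence and Lack  *)
(* fibration.  The type [cell] may contain junk; the actual 2-cells   *)
(* are those satisfying [cvalid].  [comp f g] is "f then g";          *)
(* [vcompc c d] is the vertical composite "c then d".                 *)

Record TwoCatData := {
  tob : Type; tmor : Type; tcell : Type;
  mdom : tmor -> tob; mcod : tmor -> tob;
  cdom : tcell -> tmor; ccod : tcell -> tmor;
  cvalid : tcell -> Prop;
  idm : tob -> tmor;
  comp : tmor -> tmor -> tmor;
  idc : tmor -> tcell;
  vcompc : tcell -> tcell -> tcell
}.

Arguments mdom {t}. Arguments mcod {t}. Arguments cdom {t}. Arguments ccod {t}.
Arguments cvalid {t}. Arguments idm {t}. Arguments comp {t}. Arguments idc {t}.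
Arguments vcompc {t}.

Record TwoFunctorData (C D : TwoCatData) := {
  F0 : tob C -> tob D; F1 : tmor C -> tmor D; F2 : tcell C -> tcell D
}.
Arguments F0 {C D}. Arguments F1 {C D}. Arguments F2 {C D}.

Section TwoCatNotions.
Variable C : TwoCatData.

Definition mor_between (f : tmor C) (X Y : tob C) : Prop := mdom f = X /\ mcod f = Y.

Definition cell_between (c : tcell C) (f g : tmor C) : Prop :=
  cvalid c /\ cdom c = f /\ ccod c = g.

Definition invertible_cell (c : tcell C) (f g : tmor C) : Prop :=
  cell_between c f g /\
  exists d, cell_between d g f /\ vcompc c d = idc f /\ vcompc d c = idc g.

Definition equivalence (f : tmor C) (X Y : tob C) : Prop :=
  mor_between f X Y /\
  exists g, mor_between g Y X /\
    (exists c, invertible_cell c (idm X) (comp f g)) /\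
    (exists c, invertible_cell c (comp g f) (idm Y)).
End TwoCatNotions.
Arguments mor_between {C}. Arguments cell_between {C}.
Arguments invertible_cell {C}. Arguments equivalence {C}.

Section TwoFunctorNotions.
Variables (C D : TwoCatData) (G : TwoFunctorData C D).

Definition biequivalence : Prop :=
  (forall Y : tob D, exists X : tob C, exists e : tmor D, equivalence e (F0 G X) Y) /\
  (forall (X X' : tob C) (f : tmor D), mor_between f (F0 G X) (F0 G X') ->
     exists a : tmor C, mor_between a X X' /\
       exists c : tcell D, invertible_cell c (F1 G a) f) /\
  (forall (X X' : tob C) (a a' : tmor C),
     mor_between a X X' -> mor_between a' X X' ->
     forall be : tcell D, cell_between be (F1 G a) (F1 G a') ->
       exists al : tcell C, (cell_between al a a' /\ F2 G al = be) /\
         forall al' : tcell C, cell_between al' a a' -> F2 G al' = be -> al' = al).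

Definition lack_fibration : Prop :=
  (forall (Y : tob D) (Z : tob C) (b : tmor D), equivalence b Y (F0 G Z) ->
     exists (X : tob C) (a : tmor C), equivalence a X Z /\ F1 G a = b) /\
  (forall (b : tmor D) (c : tmor C) (be : tcell D), invertible_cell be b (F1 G c) ->
     exists (a : tmor C) (al : tcell C), invertible_cell al a c /\ F2 G al = be).

Definition lack_trivial_fibration : Prop := biequivalence /\ lack_fibration.
End TwoFunctorNotions.
Arguments biequivalence {C D}. Arguments lack_fibration {C D}.
Arguments lack_trivial_fibration {C D}.

(* The horizontal 2-category H A: objects, horizontal morphisms, and  *)
(* as 2-cells a => b the squares (e_X a b e_Y).                        *)

Definition Hcat (A : DoubleCat) : TwoCatData := {|
  tob := ob A; tmor := hor A; tcell := sq A;
  mdom := hdom; mcod := hcod;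
  cdom := sq_top; ccod := sq_bot;
  cvalid := fun s => sq_left s = vid (hdom (sq_top s)) /\
                     sq_right s = vid (hcod (sq_top s));
  idm := hid; comp := hcomp;
  idc := sq_vid; vcompc := sq_vcomp |}.

Definition HF (A B : DoubleCat) (F : DoubleFunctor A B)
  : TwoFunctorData (Hcat A) (Hcat B) :=
  @Build_TwoFunctorData (Hcat A) (Hcat B) (Fo F) (Fh F) (Fs F).

(* The 2-category V A: objects are vertical morphisms, morphisms u->v  *)
(* are squares with left u and right v (composed horizontally), and a *)
(* 2-cell from al : (u a b v) to be : (u c d v) is a pair of squares   *)
(* s0 : (e a c e), s1 : (e b d e) with s0 on top of be = al on top of  *)
(* s1.                                                                 *)

Record VCell (A : DoubleCat) := mkVCell {
  vc_src : sq A; vc_tgt : sq A; vc_s0 : sq A; vc_s1 : sq A }.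
Arguments mkVCell {A}. Arguments vc_src {A}. Arguments vc_tgt {A}.
Arguments vc_s0 {A}. Arguments vc_s1 {A}.

Definition vcell_valid (A : DoubleCat) (x : VCell A) : Prop :=
  let al := vc_src x in let be := vc_tgt x in
  let s0 := vc_s0 x in let s1 := vc_s1 x in
  sq_left al = sq_left be /\ sq_right al = sq_right be /\
  sq_top s0 = sq_top al /\ sq_bot s0 = sq_top be /\
  sq_left s0 = vid (hdom (sq_top al)) /\ sq_right s0 = vid (hcod (sq_top al)) /\
  sq_top s1 = sq_bot al /\ sq_bot s1 = sq_bot be /\
  sq_left s1 = vid (hdom (sq_bot al)) /\ sq_right s1 = vid (hcod (sq_bot al)) /\
  sq_vcomp s0 be = sq_vcomp al s1.

Definition Vcat (A : DoubleCat) : TwoCatData := {|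
  tob := ver A; tmor := sq A; tcell := VCell A;
  mdom := sq_left; mcod := sq_right;
  cdom := @vc_src A; ccod := @vc_tgt A;
  cvalid := @vcell_valid A;
  idm := sq_hid; comp := sq_hcomp;
  idc := fun al => mkVCell al al (sq_vid (sq_top al)) (sq_vid (sq_bot al));
  vcompc := fun x y => mkVCell (vc_src x) (vc_tgt y)
                         (sq_vcomp (vc_s0 x) (vc_s0 y)) (sq_vcomp (vc_s1 x) (vc_s1 y)) |}.

Definition VF (A B : DoubleCat) (F : DoubleFunctor A B)
  : TwoFunctorData (Vcat A) (Vcat B) :=
  @Build_TwoFunctorData (Vcat A) (Vcat B) (Fv F) (Fs F)
     (fun x : VCell A => mkVCell (Fs F (vc_src x)) (Fs F (vc_tgt x))
                                 (Fs F (vc_s0 x)) (Fs F (vc_s1 x))).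

(* Main.v *)
Require Import Defs.
Set Implicit Arguments.

Record TLaws (T : TwoCatData) : Prop := {
 L1 : forall (x y : tcell T) f g h, cell_between x f g -> cell_between y g h -> cell_between (vcompc x y) f h;
 L2 : forall f : tmor T, cell_between (idc f) f f;
 L3 : forall f : tmor T, vcompc (idc f) (idc f) = idc f;
 L4 : forall (be : tcell T) f g, cell_between be f g -> mdom f = mdom g /\ mcod f = mcod g;
 L5 : forall (f g : tmor T) X Y Z, mor_between f X Y -> mor_between g Y Z -> mor_between (comp f g) X Z;
 L6 : forall X : tob T, mor_between (idm X) X X;
 L7 : forall X : tob T, comp (idm X) (idm X) = idm X }.

Record FLaws (C D : TwoCatData) (G : TwoFunctorData C D) : Prop := {
 G1 : forall f, mdom (F1 G f) = F0 G (mdom f);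
 G1' : forall f, mcod (F1 G f) = F0 G (mcod f);
 G2 : forall f g, mcod f = mdom g -> F1 G (comp f g) = comp (F1 G f) (F1 G g);
 G3 : forall X, F1 G (idm X) = idm (F0 G X);
 G4 : forall (x y : tcell C) f g h, cell_between x f g -> cell_between y g h ->
        F2 G (vcompc x y) = vcompc (F2 G x) (F2 G y);
 G5 : forall f, F2 G (idc f) = idc (F1 G f);
 G6 : forall x, cdom (F2 G x) = F1 G (cdom x);
 G6' : forall x, ccod (F2 G x) = F1 G (ccod x) }.

Definition Surj C D (G : TwoFunctorData C D) := forall Y : tob D, exists X, F0 G X = Y.
Definition FullEx C D (G : TwoFunctorData C D) := forall (X X' : tob C) (f : tmor D),
  mor_between f (F0 G X) (F0 G X') -> exists a, mor_between a X X' /\ F1 G a = f.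
Definition FFc C D (G : TwoFunctorData C D) := forall (X X' : tob C) (a a' : tmor C),
     mor_between a X X' -> mor_between a' X X' ->
     forall be : tcell D, cell_between be (F1 G a) (F1 G a') ->
       exists al : tcell C, (cell_between al a a' /\ F2 G al = be) /\
         forall al' : tcell C, cell_between al' a a' -> F2 G al' = be -> al' = al.

Lemma inv_sym (T : TwoCatData) (c : tcell T) f g :
  invertible_cell c f g -> exists d, invertible_cell d g f.
Proof.
  intros [Hc [d [Hd [E1 E2]]]]. exists d. split; auto. exists c; auto.
Qed.

Lemma id_inv (T : TwoCatData) (HT : TLaws T) (f : tmor T) : invertible_cell (idc f) f f.
Proof. split. apply (L2 HT). exists (idc f). rewrite (L3 HT). split; auto. apply (L2 HT). Qed.

Lemma id_equiv (T : TwoCatData) (HT : TLaws T) (X : tob T) : equivalence (idm X) X X.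
Proof.
  split. apply (L6 HT). exists (idm X). split. apply (L6 HT).
  rewrite (L7 HT). split; exists (idc (idm X)); apply id_inv; auto.
Qed.

Lemma equiv_sym (T : TwoCatData) (f : tmor T) X Y :
  equivalence f X Y -> exists g, equivalence g Y X.
Proof.
  intros [Hf [g [Hg [[c Hc] [d Hd]]]]]. exists g. split; auto. exists f. split; auto.
  destruct (inv_sym Hc) as [c' Hc']. destruct (inv_sym Hd) as [d' Hd'].
  split; eauto.
Qed.

Lemma reflect_inv C D (G : TwoFunctorData C D) (HC : TLaws C) (HD : TLaws D) (HG : FLaws G)
  (FF : FFc G) (a a' : tmor C) X X' (be : tcell D) :
  mor_between a X X' -> mor_between a' X X' -> invertible_cell be (F1 G a) (F1 G a') ->
  exists al, invertible_cell al a a' /\ F2 G al = be.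
Proof.
  intros Ha Ha' [Hbe [d [Hd [E1 E2]]]].
  destruct (FF _ _ _ _ Ha Ha' _ Hbe) as [al [[Hal Fal] Ual]].
  destruct (FF _ _ _ _ Ha' Ha _ Hd) as [dl [[Hdl Fdl] Udl]].
  exists al. split; auto. split; auto. exists dl. split; auto.
  assert (K1 := L1 HC Hal Hdl). assert (K2 := L1 HC Hdl Hal).
  split.
  - assert (Ha2 := L2 HC a).
    destruct (FF _ _ _ _ Ha Ha _ (L2 HD (F1 G a))) as [z [_ Uz]].
    rewrite (Uz _ K1), (Uz _ Ha2); auto.
    + apply (G5 HG).
    + rewrite (G4 HG Hal Hdl), Fal, Fdl; auto.
  - assert (Ha2 := L2 HC a').
    destruct (FF _ _ _ _ Ha' Ha' _ (L2 HD (F1 G a'))) as [z [_ Uz]].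
    rewrite (Uz _ K2), (Uz _ Ha2); auto.
    + apply (G5 HG).
    + rewrite (G4 HG Hdl Hal), Fal, Fdl; auto.
Qed.

Lemma lift_equiv C D (G : TwoFunctorData C D) (HC : TLaws C) (HD : TLaws D) (HG : FLaws G)
  (FF : FFc G) (Fu : FullEx G) (a : tmor C) X Z :
  mor_between a X Z -> equivalence (F1 G a) (F0 G X) (F0 G Z) -> equivalence a X Z.
Proof.
  intros Ha [_ [g [Hg [[c Hc] [d Hd]]]]].
  destruct (Fu _ _ _ Hg) as [g' [Hg' Eg]]. subst g.
  split; auto. exists g'. split; auto.
  assert (Hag : mcod a = mdom g'). destruct Ha, Hg'. congruence.
  assert (Hga : mcod g' = mdom a). destruct Ha, Hg'. congruence.
  split.
  - rewrite <- (G3 HG), <- (G2 HG _ _ Hag) in Hc.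
    destruct (reflect_inv HC HD HG FF (L6 HC X) (L5 HC Ha Hg') Hc) as [al [Hal _]]; eauto.
  - rewrite <- (G3 HG), <- (G2 HG _ _ Hga) in Hd.
    destruct (reflect_inv HC HD HG FF (L5 HC Hg' Ha) (L6 HC Z) Hd) as [al [Hal _]]; eauto.
Qed.

Lemma to_ltf C D (G : TwoFunctorData C D) (HC : TLaws C) (HD : TLaws D) (HG : FLaws G) :
  Surj G -> FullEx G -> FFc G -> lack_trivial_fibration G.
Proof.
  intros S Fu FF. split; [split; [|split]|split].
  - intros Y. destruct (S Y) as [X <-]. exists X, (idm (F0 G X)). apply id_equiv; auto.
  - intros X X' f Hf. destruct (Fu _ _ _ Hf) as [a [Ha <-]]. exists a. split; auto.
    exists (idc (F1 G a)). apply id_inv; auto.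
  - exact FF.
  - intros Y Z b Hb. destruct (S Y) as [X <-]. destruct Hb as [Hb0 Hb1].
    destruct (Fu _ _ _ Hb0) as [a [Ha <-]]. exists X, a. split; auto.
    apply (lift_equiv HC HD HG FF Fu Ha). split; auto.
  - intros b c be Hbe.
    destruct Hbe as [Hb0 Hb1]. destruct Hb0 as [Hv [Hd Hc]].
    destruct (L4 HD (conj Hv (conj Hd Hc))) as [E1 E2].
    assert (Hb : mor_between b (F0 G (mdom c)) (F0 G (mcod c))).
    { split. rewrite E1; apply (G1 HG). rewrite E2; apply (G1' HG). }
    destruct (Fu _ _ _ Hb) as [a [Ha <-]].
    assert (Hc' : mor_between c (mdom c) (mcod c)) by (split; auto).
    destruct (reflect_inv HC HD HG FF Ha Hc' (conj (conj Hv (conj Hd Hc)) Hb1)) as [al [H1 H2]].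
    exists a, al; auto.
Qed.

Lemma from_ltf C D (G : TwoFunctorData C D) (HC : TLaws C) (HD : TLaws D) (HG : FLaws G) :
  lack_trivial_fibration G -> Surj G /\ FullEx G /\ FFc G.
Proof.
  intros [[B1 [B2 B3]] [LF1 LF2]]. split; [|split; auto].
  - intros Y. destruct (B1 Y) as [X [e He]].
    destruct (equiv_sym He) as [g Hg]. destruct (LF1 _ _ _ Hg) as [X' [a [Ha Ea]]].
    exists X'. destruct Ha as [[Ha1 _] _]. destruct Hg as [[Hg1 _] _].
    rewrite <- Ha1, <- (G1 HG), Ea; auto.
  - intros X X' f Hf. destruct (B2 _ _ _ Hf) as [a [Ha [c Hc]]].
    destruct (inv_sym Hc) as [d Hd].
    destruct (LF2 _ _ _ Hd) as [a' [al [Hal Fal]]].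
    exists a'. destruct Hal as [[Hv [Hd1 Hd2]] _].
    destruct (L4 HC (conj Hv (conj Hd1 Hd2))) as [E1 E2].
    destruct Hd as [[_ [Dd _]] _].
    split.
    + destruct Ha. split; congruence.
    + rewrite <- Hd1, <- (G6 HG), Fal; auto.
Qed.
Set Implicit Arguments.
Arguments hdom_hid {d} A. Arguments hcod_hid {d} A. Arguments vdom_vid {d} A. Arguments vcod_vid {d} A.
Arguments hdom_hcomp {d a b} _. Arguments hcod_hcomp {d a b} _.
Arguments vdom_vcomp {d u v} _. Arguments vcod_vcomp {d u v} _.
Arguments sq_frame_tl {d} s. Arguments sq_frame_tr {d} s. Arguments sq_frame_bl {d} s. Arguments sq_frame_br {d} s.
Arguments sq_hid_left {d} u. Arguments sq_hid_right {d} u. Arguments sq_hid_top {d} u. Arguments sq_hid_bot {d} u.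
Arguments sq_vid_top {d} a. Arguments sq_vid_bot {d} a. Arguments sq_vid_left {d} a. Arguments sq_vid_right {d} a.
Arguments sq_hcomp_top {d s t} _. Arguments sq_hcomp_bot {d s t} _. Arguments sq_hcomp_left {d s t} _. Arguments sq_hcomp_right {d s t} _.
Arguments sq_vcomp_top {d s t} _. Arguments sq_vcomp_bot {d s t} _. Arguments sq_vcomp_left {d s t} _. Arguments sq_vcomp_right {d s t} _.
Arguments hcomp_id_l {d} a. Arguments hcomp_id_r {d} a. Arguments vcomp_id_l {d} u. Arguments vcomp_id_r {d} u.
Arguments sq_hcomp_id_l {d} s. Arguments sq_hcomp_id_r {d} s. Arguments sq_vcomp_id_l {d} s. Arguments sq_vcomp_id_r {d} s.
Arguments sq_vcomp_assoc {d s t r} _ _. Arguments sq_hcomp_assoc {d s t r} _ _.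
Arguments Fs_sq_vcomp [A B] d {s t} _. Arguments Fs_sq_hcomp [A B] d {s t} _.
Arguments Fh_hcomp [A B] d {a b} _. Arguments Fv_vcomp [A B] d {u v} _.

Lemma Hcell_ends (A : DoubleCat) (s : sq A) :
  sq_left s = vid (hdom (sq_top s)) -> sq_right s = vid (hcod (sq_top s)) ->
  hdom (sq_bot s) = hdom (sq_top s) /\ hcod (sq_bot s) = hcod (sq_top s).
Proof.
  intros H1 H2. rewrite (sq_frame_bl s), (sq_frame_br s), H1, H2, !vcod_vid. auto.
Qed.

Lemma vid_vid (A : DoubleCat) (X : ob A) : vcomp (vid X) (vid X) = vid X.
Proof. pose proof (vcomp_id_l (vid X)) as E. rewrite vdom_vid in E. exact E. Qed.

Lemma H_laws (A : DoubleCat) : TLaws (Hcat A).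
Proof.
  constructor; unfold cell_between, mor_between; simpl.
  - intros x y f g h [[Lx Rx] [Tx Bx]] [[Ly Ry] [Ty By]]; simpl in *.
    destruct (@Hcell_ends _ _ Lx Rx) as [E1 E2].
    assert (C : sq_bot x = sq_top y) by congruence.
    split; [|split].
    + simpl; rewrite (sq_vcomp_left C), (sq_vcomp_right C), (sq_vcomp_top C), Lx, Rx, Ly, Ry, <- C, E1, E2, !vid_vid. auto.
    + simpl; rewrite (sq_vcomp_top C). auto.
    + simpl; rewrite (sq_vcomp_bot C). auto.
  - intros f. rewrite sq_vid_left, sq_vid_right, sq_vid_top, sq_vid_bot. repeat split.
  - intros f. pose proof (sq_vcomp_id_l (sq_vid f)) as E. rewrite sq_vid_top in E. exact E.
  - intros be f g [[L R] [T Bo]]; simpl in *. destruct (@Hcell_ends _ _ L R) as [E1 E2]. subst. auto.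
  - intros f g X Y Z [H1 H2] [H3 H4]. split.
    + rewrite hdom_hcomp; congruence.
    + rewrite hcod_hcomp; congruence.
  - intros X. split; [apply hdom_hid | apply hcod_hid].
  - intros X. pose proof (hcomp_id_l (hid X)) as E. rewrite hdom_hid in E. exact E.
Qed.

Lemma HF_laws (A B : DoubleCat) (F : DoubleFunctor A B) : FLaws (HF F).
Proof.
  constructor; unfold cell_between, mor_between; simpl.
  - apply Fh_hdom.
  - apply Fh_hcod.
  - apply Fh_hcomp.
  - apply Fh_hid.
  - intros x y f g h [_ [_ Bx]] [_ [Ty _]]. apply Fs_sq_vcomp. congruence.
  - apply Fs_sq_vid.
  - apply Fs_top.
  - apply Fs_bot.
Qed.

Lemma V_laws (A : DoubleCat) : TLaws (Vcat A).
Proof.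
  constructor; unfold cell_between, mor_between; simpl.
  - intros [f g a0 a1] [g' h b0 b1] f1 g1 h1; unfold vcell_valid; simpl.
    intros [[X1 [X2 [X3 [X4 [X5 [X6 [X7 [X8 [X9 [X10 X11]]]]]]]]]] [<- <-]].
    intros [[Y1 [Y2 [Y3 [Y4 [Y5 [Y6 [Y7 [Y8 [Y9 [Y10 Y11]]]]]]]]]] [E <-]]. subst g'.
    destruct (@Hcell_ends _ a0) as [Ea1 Ea2]; [congruence|congruence|].
    destruct (@Hcell_ends _ a1) as [Eb1 Eb2]; [congruence|congruence|].
    assert (C0 : sq_bot a0 = sq_top b0) by congruence.
    assert (C1 : sq_bot a1 = sq_top b1) by congruence.
    split; [|split; auto].
    rewrite (sq_vcomp_top C0), (sq_vcomp_bot C0), (sq_vcomp_left C0), (sq_vcomp_right C0),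
      (sq_vcomp_top C1), (sq_vcomp_bot C1), (sq_vcomp_left C1), (sq_vcomp_right C1).
    rewrite X5, X6, Y5, Y6, X9, X10, Y9, Y10.
    assert (K1 : hdom (sq_top g) = hdom (sq_top f)) by congruence.
    assert (K2 : hcod (sq_top g) = hcod (sq_top f)) by congruence.
    assert (K3 : hdom (sq_bot g) = hdom (sq_bot f)) by congruence.
    assert (K4 : hcod (sq_bot g) = hcod (sq_bot f)) by congruence.
    rewrite K1, K2, K3, K4, !vid_vid.
    repeat split; try congruence.
    assert (D1 : sq_bot b0 = sq_top h) by congruence.
    assert (D2 : sq_bot a0 = sq_top g) by congruence.
    assert (D3 : sq_bot g = sq_top b1) by congruence.
    assert (D4 : sq_bot f = sq_top a1) by congruence.
    rewrite <- (sq_vcomp_assoc C0 D1), Y11, (sq_vcomp_assoc D2 D3), X11,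
      <- (sq_vcomp_assoc D4 C1). reflexivity.
  - intros f. unfold vcell_valid; simpl.
    rewrite !sq_vid_top, !sq_vid_bot, !sq_vid_left, !sq_vid_right.
    rewrite sq_vcomp_id_l, sq_vcomp_id_r. repeat split.
  - intros f. f_equal.
    + pose proof (sq_vcomp_id_l (sq_vid (sq_top f))) as E. rewrite sq_vid_top in E. exact E.
    + pose proof (sq_vcomp_id_l (sq_vid (sq_bot f))) as E. rewrite sq_vid_top in E. exact E.
  - intros [f g a0 a1] f1 g1; unfold vcell_valid; simpl.
    intros [[X1 [X2 _]] [<- <-]]. auto.
  - intros f g X Y Z [H1 H2] [H3 H4]. assert (C : sq_right f = sq_left g) by congruence.
    rewrite (sq_hcomp_left C), (sq_hcomp_right C). auto.
  - intros X. rewrite sq_hid_left, sq_hid_right. auto.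
  - intros X. pose proof (sq_hcomp_id_l (sq_hid X)) as E. rewrite sq_hid_left in E. exact E.
Qed.

Lemma VF_laws (A B : DoubleCat) (F : DoubleFunctor A B) : FLaws (VF F).
Proof.
  constructor; simpl.
  - apply Fs_left.
  - apply Fs_right.
  - intros f g C. apply (Fs_sq_hcomp F C).
  - apply Fs_sq_hid.
  - intros [f g a0 a1] [g' h b0 b1] f1 g1 h1; unfold cell_between, vcell_valid; simpl.
    intros [[X1 [X2 [X3 [X4 [X5 [X6 [X7 [X8 [X9 [X10 X11]]]]]]]]]] [<- <-]].
    intros [[Y1 [Y2 [Y3 [Y4 [Y5 [Y6 [Y7 [Y8 [Y9 [Y10 Y11]]]]]]]]]] [E <-]]. subst g'; simpl in *.
    assert (C0 : sq_bot a0 = sq_top b0) by congruence.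
    assert (C1 : sq_bot a1 = sq_top b1) by congruence.
    rewrite (Fs_sq_vcomp F C0), (Fs_sq_vcomp F C1). reflexivity.
  - intros f. rewrite !Fs_sq_vid, Fs_top, Fs_bot. reflexivity.
  - reflexivity.
  - reflexivity.
Qed.
Set Implicit Arguments.


Lemma fwd_H (A B : DoubleCat) (F : DoubleFunctor A B) :
  double_trivial_fibration F -> Surj (HF F) /\ FullEx (HF F) /\ FFc (HF F).
Proof.
  intros [D1 [D2 [D3 D4]]]. split; [|split].
  - exact D1.
  - intros X X' f [H1 H2]. simpl in *. destruct (D2 _ _ _ H1 H2) as [a [Ha1 [Ha2 Ha3]]].
    exists a. split; [split|]; auto.
  - intros X X' a a' [Ha1 Ha2] [Ha1' Ha2'] be [[Hl Hr] [Ht Hb]]. simpl in *.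
    assert (E1 : sq_left be = Fv F (vid X)).
    { rewrite Fv_vid, Hl, Ht, Fh_hdom, Ha1. auto. }
    assert (E2 : sq_right be = Fv F (vid X')).
    { rewrite Fv_vid, Hr, Ht, Fh_hcod, Ha2. auto. }
    destruct (D4 (vid X) (vid X') a a' be) as [al [[A1 [A2 [A3 [A4 A5]]]] U]];
      try rewrite ?vdom_vid, ?vcod_vid; auto.
    exists al. split.
    + unfold cell_between; simpl. rewrite A3, A1, A2, Ha1, Ha2. auto.
    + intros al' [[L R] [T Bo]] Fe. simpl in *. apply U; auto.
      * rewrite L, T, Ha1. auto.
      * rewrite R, T, Ha2. auto.
Qed.

Lemma lift_sq (A B : DoubleCat) (F : DoubleFunctor A B) :
  double_trivial_fibration F -> forall (u u' : ver A) (be : sq B),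
  sq_left be = Fv F u -> sq_right be = Fv F u' ->
  exists al, sq_left al = u /\ sq_right al = u' /\ Fs F al = be.
Proof.
  intros [D1 [D2 [D3 D4]]] u u' be Hl Hr.
  destruct (D2 (vdom u) (vdom u') (sq_top be)) as [a [Ha1 [Ha2 Ha3]]].
  { rewrite sq_frame_tl, Hl, Fv_vdom. auto. }
  { rewrite sq_frame_tr, Hr, Fv_vdom. auto. }
  destruct (D2 (vcod u) (vcod u') (sq_bot be)) as [c [Hc1 [Hc2 Hc3]]].
  { rewrite sq_frame_bl, Hl, Fv_vcod. auto. }
  { rewrite sq_frame_br, Hr, Fv_vcod. auto. }
  destruct (D4 u u' a c be) as [al [[A1 [A2 [A3 [A4 A5]]]] _]]; auto.
  exists al. auto.
Qed.

Lemma Hff (A B : DoubleCat) (F : DoubleFunctor A B) :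
  double_trivial_fibration F -> forall (a a' : hor A) (t : sq B),
  hdom a = hdom a' -> hcod a = hcod a' ->
  sq_left t = vid (hdom (sq_top t)) -> sq_right t = vid (hcod (sq_top t)) ->
  sq_top t = Fh F a -> sq_bot t = Fh F a' ->
  exists s, (sq_left s = vid (hdom a) /\ sq_right s = vid (hcod a) /\ sq_top s = a /\
             sq_bot s = a' /\ Fs F s = t) /\
    forall s', sq_left s' = vid (hdom a) -> sq_right s' = vid (hcod a) -> sq_top s' = a ->
             sq_bot s' = a' -> Fs F s' = t -> s' = s.
Proof.
  intros D a a' t E1 E2 Hl Hr Ht Hb.
  destruct D as [D1 [D2 [D3 D4]]].
  apply D4; rewrite ?vdom_vid, ?vcod_vid; auto.
  - rewrite Fv_vid, Hl, Ht, Fh_hdom. auto.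
  - rewrite Fv_vid, Hr, Ht, Fh_hcod. auto.
Qed.

Lemma fwd_V (A B : DoubleCat) (F : DoubleFunctor A B) :
  double_trivial_fibration F -> Surj (VF F) /\ FullEx (VF F) /\ FFc (VF F).
Proof.
  intros D. pose proof D as [D1 [D2 [D3 D4]]]. split; [|split].
  - exact D3.
  - intros X X' f [H1 H2]. simpl in *. destruct (lift_sq D X X' f H1 H2) as [al [A1 [A2 A3]]].
    exists al. split; [split|]; auto.
  - intros X X' al al' [Ha1 Ha2] [Ha1' Ha2'] [p q t0 t1]. simpl in *.
    unfold cell_between, vcell_valid; simpl.
    intros [[V1 [V2 [V3 [V4 [V5 [V6 [V7 [V8 [V9 [V10 V11]]]]]]]]]] [Ep Eq]].
    subst p q. simpl in *. rewrite ?Fs_top, ?Fs_bot, ?Fs_left, ?Fs_right in *.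
    assert (Et1 : hdom (sq_top al) = vdom X) by (rewrite sq_frame_tl, Ha1; auto).
    assert (Et2 : hcod (sq_top al) = vdom X') by (rewrite sq_frame_tr, Ha2; auto).
    assert (Et1' : hdom (sq_top al') = vdom X) by (rewrite sq_frame_tl, Ha1'; auto).
    assert (Et2' : hcod (sq_top al') = vdom X') by (rewrite sq_frame_tr, Ha2'; auto).
    assert (Eb1 : hdom (sq_bot al) = vcod X) by (rewrite sq_frame_bl, Ha1; auto).
    assert (Eb2 : hcod (sq_bot al) = vcod X') by (rewrite sq_frame_br, Ha2; auto).
    assert (Eb1' : hdom (sq_bot al') = vcod X) by (rewrite sq_frame_bl, Ha1'; auto).
    assert (Eb2' : hcod (sq_bot al') = vcod X') by (rewrite sq_frame_br, Ha2'; auto).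
    idtac.
    destruct (Hff D (sq_top al) (sq_top al') t0) as [s0 [[S1 [S2 [S3 [S4 S5]]]] U0]];
      try congruence.
    destruct (Hff D (sq_bot al) (sq_bot al') t1) as [s1 [[R1 [R2 [R3 [R4 R5]]]] U1]];
      try congruence.
    assert (C0 : sq_bot s0 = sq_top al') by auto.
    assert (C1 : sq_bot al = sq_top s1) by auto.
    assert (Key : sq_vcomp s0 al' = sq_vcomp al s1).
    { destruct (D4 X X' (sq_top al) (sq_bot al') (Fs F (sq_vcomp s0 al'))) as [z [_ Uz]];
        try congruence.
      - rewrite Fs_left, (sq_vcomp_left C0), S1, Ha1', Et1, vcomp_id_l. auto.
      - rewrite Fs_right, (sq_vcomp_right C0), S2, Ha2', Et2, vcomp_id_l. auto.
      - rewrite Fs_top, (sq_vcomp_top C0), S3. auto.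
      - rewrite Fs_bot, (sq_vcomp_bot C0). auto.
      - rewrite (Uz (sq_vcomp s0 al')), (Uz (sq_vcomp al s1)); auto.
        + rewrite (sq_vcomp_left C1), R1, Ha1, Eb1, vcomp_id_r. auto.
        + rewrite (sq_vcomp_right C1), R2, Ha2, Eb2, vcomp_id_r. auto.
        + rewrite (sq_vcomp_top C1). auto.
        + rewrite (sq_vcomp_bot C1). auto.
        + rewrite (Fs_sq_vcomp F C1), (Fs_sq_vcomp F C0), S5, R5. auto.
        + rewrite (sq_vcomp_left C0), S1, Ha1', Et1, vcomp_id_l. auto.
        + rewrite (sq_vcomp_right C0), S2, Ha2', Et2, vcomp_id_l. auto.
        + rewrite (sq_vcomp_top C0). auto.
        + rewrite (sq_vcomp_bot C0). auto. }
    exists (mkVCell al al' s0 s1). split.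
    + split.
      * unfold cell_between, vcell_valid; simpl. split; [repeat split; congruence | auto].
      * simpl. rewrite S5, R5. reflexivity.
    + intros [p q r0 r1]. unfold cell_between, vcell_valid; simpl.
      intros [[W1 [W2 [W3 [W4 [W5 [W6 [W7 [W8 [W9 [W10 W11]]]]]]]]]] [-> ->]] Fe.
      assert (Fr0 : Fs F r0 = t0) by (apply (f_equal (@vc_s0 B)) in Fe; exact Fe).
      assert (Fr1 : Fs F r1 = t1) by (apply (f_equal (@vc_s1 B)) in Fe; exact Fe).
      rewrite (U0 r0), (U1 r1); auto; congruence.
Qed.

Lemma bwd (A B : DoubleCat) (F : DoubleFunctor A B) :
  Surj (HF F) -> FullEx (HF F) -> FFc (HF F) ->
  Surj (VF F) -> FullEx (VF F) -> FFc (VF F) -> double_trivial_fibration F.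
Proof.
  intros SH FuH FFH SV FuV FFV. split; [|split; [|split]].
  - exact SH.
  - intros X Z b H1 H2. destruct (FuH X Z b (conj H1 H2)) as [a [[Ha1 Ha2] Ha3]].
    exists a. auto.
  - exact SV.
  - intros u u' a c be Fa1 Fa2 Fc1 Fc2 Hl Hr Ht Hb.
    assert (Uniq : forall al1 al2 : sq A,
      sq_left al1 = u -> sq_right al1 = u' -> sq_top al1 = a -> sq_bot al1 = c ->
      sq_left al2 = u -> sq_right al2 = u' -> sq_top al2 = a -> sq_bot al2 = c ->
      Fs F al1 = Fs F al2 -> al1 = al2).
    { intros al1 al2 P1 P2 P3 P4 Q1 Q2 Q3 Q4 E.
      assert (M1 : @mor_between (Vcat A) al1 u u') by (split; auto).
      assert (M2 : @mor_between (Vcat A) al2 u u') by (split; auto).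
      pose proof (L2 (V_laws B) (Fs F al1)) as Cid.
      assert (Cid' : @cell_between (Vcat B) (@idc (Vcat B) (Fs F al1)) (F1 (VF F) al1) (F1 (VF F) al2)).
      { simpl. rewrite <- E. exact Cid. }
      destruct (FFV u u' al1 al2 M1 M2 _ Cid') as [[p q s0 s1] [[Hx Fx] _]].
      destruct Hx as [[W1 [W2 [W3 [W4 [W5 [W6 [W7 [W8 [W9 [W10 W11]]]]]]]]]] [Ep Eq]].
      simpl in *. subst p q.
      assert (Fs0 : Fs F s0 = sq_vid (Fh F a))
        by (apply (f_equal (@vc_s0 B)) in Fx; simpl in Fx; rewrite Fx, Fs_top, P3; auto).
      assert (Fs1 : Fs F s1 = sq_vid (Fh F c))
        by (apply (f_equal (@vc_s1 B)) in Fx; simpl in Fx; rewrite Fx, Fs_bot, P4; auto).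
      assert (Ma : @mor_between (Hcat A) a (hdom a) (hcod a)) by (split; auto).
      assert (Mc : @mor_between (Hcat A) c (hdom c) (hcod c)) by (split; auto).
      destruct (FFH _ _ _ _ Ma Ma _ (L2 (H_laws B) (Fh F a))) as [z0 [_ U0]].
      destruct (FFH _ _ _ _ Mc Mc _ (L2 (H_laws B) (Fh F c))) as [z1 [_ U1]].
      assert (E0 : s0 = sq_vid a).
      { rewrite (U0 s0), (U0 (sq_vid a)); auto.
        - apply (L2 (H_laws A)).
        - apply Fs_sq_vid.
        - unfold cell_between; simpl. rewrite P3 in *. repeat split; congruence. }
      assert (E1 : s1 = sq_vid c).
      { rewrite (U1 s1), (U1 (sq_vid c)); auto.
        - apply (L2 (H_laws A)).
        - apply Fs_sq_vid.
        - unfold cell_between; simpl. rewrite P4 in *. repeat split; congruence. }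
      subst s0 s1.
      pose proof (sq_vcomp_id_l al2) as K2. rewrite Q3 in K2.
      pose proof (sq_vcomp_id_r al1) as K1. rewrite P4 in K1.
      congruence. }
    assert (Mbe : @mor_between (Vcat B) be (F0 (VF F) u) (F0 (VF F) u')) by (split; auto).
    destruct (FuV u u' be Mbe) as [al1 [[L1 R1] Fal1]]. simpl in *.
    assert (Ta : Fh F (sq_top al1) = Fh F a) by (rewrite <- Fs_top, Fal1; auto).
    assert (Tc : Fh F (sq_bot al1) = Fh F c) by (rewrite <- Fs_bot, Fal1; auto).
    assert (Ma : @mor_between (Hcat A) a (hdom a) (hcod a)) by (split; auto).
    assert (Mc : @mor_between (Hcat A) c (hdom c) (hcod c)) by (split; auto).
    assert (Ma' : @mor_between (Hcat A) (sq_top al1) (hdom a) (hcod a)).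
    { split; simpl. rewrite sq_frame_tl, L1; auto. rewrite sq_frame_tr, R1; auto. }
    assert (Mc' : @mor_between (Hcat A) (sq_bot al1) (hdom c) (hcod c)).
    { split; simpl. rewrite sq_frame_bl, L1; auto. rewrite sq_frame_br, R1; auto. }
    assert (Ca : @cell_between (Hcat B) (sq_vid (Fh F a)) (F1 (HF F) a) (F1 (HF F) (sq_top al1))).
    { simpl. rewrite Ta. exact (L2 (H_laws B) (Fh F a)). }
    assert (Cc : @cell_between (Hcat B) (sq_vid (Fh F c)) (F1 (HF F) (sq_bot al1)) (F1 (HF F) c)).
    { simpl. rewrite Tc. exact (L2 (H_laws B) (Fh F c)). }
    destruct (FFH _ _ _ _ Ma Ma' _ Ca) as [sg [[[[Sl Sr] [St Sb]] Fsg] _]].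
    destruct (FFH _ _ _ _ Mc' Mc _ Cc) as [tu [[[[Tl Tr] [Tt Tb]] Ftu] _]].
    simpl in *.
    assert (C1 : sq_bot al1 = sq_top tu) by auto.
    assert (C0 : sq_bot sg = sq_top (sq_vcomp al1 tu)) by (rewrite (sq_vcomp_top C1); auto).
    assert (Pl : sq_left (sq_vcomp sg (sq_vcomp al1 tu)) = u).
    { rewrite (sq_vcomp_left C0), (sq_vcomp_left C1), Sl, Tl, St, Tt, L1.
      rewrite sq_frame_bl, L1, vcomp_id_r, Fa1, vcomp_id_l. auto. }
    assert (Pr : sq_right (sq_vcomp sg (sq_vcomp al1 tu)) = u').
    { rewrite (sq_vcomp_right C0), (sq_vcomp_right C1), Sr, Tr, St, Tt, R1.
      rewrite sq_frame_br, R1, vcomp_id_r, Fa2, vcomp_id_l. auto. }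
    assert (Pt : sq_top (sq_vcomp sg (sq_vcomp al1 tu)) = a) by (rewrite (sq_vcomp_top C0); auto).
    assert (Pb : sq_bot (sq_vcomp sg (sq_vcomp al1 tu)) = c)
      by (rewrite (sq_vcomp_bot C0), (sq_vcomp_bot C1); auto).
    assert (PF : Fs F (sq_vcomp sg (sq_vcomp al1 tu)) = be).
    { rewrite (Fs_sq_vcomp F C0), (Fs_sq_vcomp F C1), Fsg, Ftu, Fal1, <- Ht, <- Hb.
      rewrite sq_vcomp_id_r, sq_vcomp_id_l. auto. }
    exists (sq_vcomp sg (sq_vcomp al1 tu)). split.
    + auto.
    + intros al' Q1 Q2 Q3 Q4 Q5. apply Uniq; auto. congruence.
Qed.

Theorem corollary3p14 (A B : DoubleCat) (F : DoubleFunctor A B) :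
  double_trivial_fibration F <->
  (lack_trivial_fibration (HF F) /\ lack_trivial_fibration (VF F)).
Proof.
  split.
  - intros D. destruct (fwd_H D) as [S1 [S2 S3]]. destruct (fwd_V D) as [T1 [T2 T3]].
    split.
    + apply (to_ltf (H_laws A) (H_laws B) (HF_laws F)); auto.
    + apply (to_ltf (V_laws A) (V_laws B) (VF_laws F)); auto.
  - intros [LH LV].
    destruct (from_ltf (H_laws A) (H_laws B) (HF_laws F) LH) as [S1 [S2 S3]].
    destruct (from_ltf (V_laws A) (V_laws B) (VF_laws F) LV) as [T1 [T2 T3]].
    apply bwd; auto.
Qed.
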